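(* Let $N\ge3$ and let both layers be the unweighted complete graph on $N$ nodes without self-loops. Consider the process described in the context started from the state $\boldsymbol{\xi}$ in which individual $1$ is the only cooperator in layer 1 and also the only mutant in layer 2. Let $\rho^{[1]}(\boldsymbol{\xi})$ be the probability that layer 1 eventually consists only of cooperators, and let $c>0$. Then $\left.\frac{\mathrm{d}}{\mathrm{d}\delta}\rho^{[1]}(\boldsymbol{\xi})\right|_{\delta=0}>0$ (spite is favored) if and only if $$\frac bc<-(N-1)+\frac{r-1}{c}\cdot\frac{2(N-1)^2}{N(2N-3)} .$$
   Context: $N$ individuals; in both layers $L\in\{1,2\}$, $w^{[L]}_{ij}=1$ for $i\ne j$ and $w^{[L]}_{ii}=0$. States $(x^{[1]},x^{[2]})\in\{0,1\}^N\times\{0,1\}^N$: $x^{[1]}_i=1$ means cooperator (else defector) in layer 1, $x^{[2]}_i=1$ means mutant (else resident) in layer 2. Payoff: $u_i=-c\,x^{[1]}_i+\frac{b}{N-1}\sum_{j\ne i}x^{[1]}_j+(r-1)x^{[2]}_i+1$ with $r\ge0$; fecundity $F_i=1+\delta u_i$, $\delta\ge0$. Each time step, simultaneously and independently in each layer $L$: choose $i$ uniformly at random, choose $j\neq i$ with probability $F_j/\sum_{k\ne i}F_k$, and set $x^{[L]}_i\leftarrow x^{[L]}_j$ (death-Birth updating in both layers). *)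

(* Defs.v *)
From HB Require Import structures.
From mathcomp Require Import all_boot all_order all_algebra.
From mathcomp Require Import all_classical all_reals all_analysis.
Set Implicit Arguments. Unset Strict Implicit. Unset Printing Implicit Defensive.
Import Order.TTheory GRing.Theory Num.Theory.
Import numFieldNormedType.Exports.
Local Open Scope ring_scope.

(* A layer configuration: x i = true means cooperator (layer 1) / mutant (layer 2). *)
Definition config (N : nat) := {ffun 'I_N -> bool}.
Definition state (N : nat) : finType := (config N * config N)%type.

Section Model.
Variables (R : realType) (N : nat) (b c r : R).

(* u_i = -c x1_i + b/(N-1) sum_{j<>i} x1_j + (r-1) x2_i + 1
   (complete graph without self-loops, w_ij = 1 for i <> j). *)
Definition payoff (s : state N) (i : 'I_N) : R :=
  - c * (s.1 i)%:R
  + b / (N%:R - 1) * \sum_(j < N | j != i) (s.1 j)%:R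
  + (r - 1) * (s.2 i)%:R + 1.

Definition fecundity (delta : R) (s : state N) (i : 'I_N) : R :=
  1 + delta * payoff s i.

Definition cupd (x : config N) (i : 'I_N) (v : bool) : config N :=
  [ffun k => if k == i then v else x k].

(* death-Birth update in one layer: probability to go from x to y, given
   fecundities F: i uniform, j <> i with prob F_j / sum_{k<>i} F_k, x_i <- x_j. *)
Definition dB_step (F : 'I_N -> R) (x y : config N) : R :=
  \sum_(i < N) \sum_(j < N | j != i)
     (N%:R)^-1 * (F j / \sum_(k < N | k != i) F k) * (y == cupd x i (x j))%:R.

Definition trans (delta : R) (s t : state N) : R :=
  dB_step (fecundity delta s) s.1 t.1 * dB_step (fecundity delta s) s.2 t.2.

Fixpoint transn (delta : R) (n : nat) (s t : state N) : R :=
  match n with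
  | 0%N => (s == t)%:R
  | n'.+1 => \sum_(u : state N) trans delta s u * transn delta n' u t
  end.

Definition allC_prob (delta : R) (s : state N) (n : nat) : R :=
  \sum_(t : state N | [forall i, t.1 i]) transn delta n s t.

(* rho^[1](s): probability that layer 1 eventually consists only of cooperators.
   The set of such states is absorbing, so this is the limit of allC_prob. *)
Definition rho1 (delta : R) (s : state N) : R := limn (allC_prob delta s).

(* xi: individual 1 (index 0) is the only cooperator in layer 1 and the
   only mutant in layer 2 *)
Definition xi_single : state N :=
  ([ffun k : 'I_N => nat_of_ord k == 0%N], [ffun k : 'I_N => nat_of_ord k == 0%N]).

End Model.

(* Main.v *)
Require Import Defs.
From HB Require Import structures.
From mathcomp Require Import all_boot all_order all_algebra.
From mathcomp Require Import all_classical all_reals all_analysis.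
From mathcomp Require Import ring lra.
Import Order.TTheory GRing.Theory Num.Theory.
Import numFieldNormedType.Exports.
Local Open Scope classical_set_scope.
Local Open Scope ring_scope.
Set Implicit Arguments. Unset Strict Implicit. Unset Printing Implicit Defensive.

Section Markov.
Variables (R : realType) (S : finType) (K : S -> S -> R).
Hypothesis K0 : forall s t, 0 <= K s t.
Hypothesis K1 : forall s, \sum_t K s t = 1.

Fixpoint gtransn n (s t : S) : R :=
  match n with
  | 0%N => (s == t)%:R
  | n'.+1 => \sum_u K s u * gtransn n' u t
  end.

Definition En n (f : S -> R) s := \sum_t gtransn n s t * f t.
Definition Kf (f : S -> R) s := \sum_t K s t * f t.

Lemma En0 f s : En 0 f s = f s.
Proof.
rewrite /En (bigD1 s) //= eqxx mul1r big1 ?addr0 // => t ts.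
by rewrite eq_sym (negPf ts) mul0r.
Qed.

Lemma EnS n f s : En n.+1 f s = \sum_u K s u * En n f u.
Proof.
rewrite /En /=.
under eq_bigr do rewrite mulr_suml.
rewrite exchange_big /=; apply: eq_bigr => u _.
by rewrite mulr_sumr; apply: eq_bigr => t _; rewrite mulrA.
Qed.

Lemma EnSK n f s : En n.+1 f s = En n (Kf f) s.
Proof.
elim: n s => [|n IH] s.
  by rewrite EnS En0 /Kf; apply: eq_bigr => u _; rewrite En0.
by rewrite EnS [RHS]EnS; apply: eq_bigr => u _; rewrite IH.
Qed.

Lemma gtransn_ge0 n s t : 0 <= gtransn n s t.
Proof.
elim: n s => [|n IH] s /=; first by rewrite ler0n.
by apply: sumr_ge0 => u _; apply: mulr_ge0.
Qed.

Lemma En_le n f g s : (forall t, f t <= g t) -> En n f s <= En n g s.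
Proof.
move=> fg; apply: ler_sum => t _; apply: ler_wpM2l => //; exact: gtransn_ge0.
Qed.

Lemma En_cst n k s : En n (fun _ => k) s = k.
Proof.
elim: n s => [|n IH] s; first by rewrite En0.
rewrite EnS.
under eq_bigr do rewrite IH.
by rewrite -mulr_suml K1 mul1r.
Qed.

Lemma EnD n f g s : En n (fun t => f t + g t) s = En n f s + En n g s.
Proof. by rewrite /En -big_split /=; apply: eq_bigr => t _; rewrite mulrDr. Qed.

Lemma EnZ n k f s : En n (fun t => k * f t) s = k * En n f s.
Proof. by rewrite /En mulr_sumr; apply: eq_bigr => t _; rewrite mulrCA. Qed.

Lemma EnB n f g s : En n (fun t => f t - g t) s = En n f s - En n g s.
Proof.
rewrite EnD; congr (_ + _).
have -> : (fun t => - g t) = (fun t => (-1) * g t) by apply: funext => t; rewrite mulN1r.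
by rewrite EnZ mulN1r.
Qed.

Lemma En_abs n f s : `|En n f s| <= En n (fun t => `|f t|) s.
Proof.
rewrite /En; apply: le_trans (ler_norm_sum _ _ _) _.
apply: ler_sum => t _; rewrite normrM ger0_norm //; exact: gtransn_ge0.
Qed.

Lemma Kf_le f g s : (forall t, f t <= g t) -> Kf f s <= Kf g s.
Proof. move=> fg; apply: ler_sum => t _; exact: ler_wpM2l. Qed.

Variables (T C : pred S) (phi w : S -> R) (eps B : R).
Hypothesis hT : forall s, Kf (fun t => (T t)%:R) s <= (T s)%:R.
Hypothesis hC : forall s, (C s)%:R <= Kf (fun t => (C t)%:R) s.
Hypothesis hphi : forall s, `|Kf phi s - phi s| <= eps * (T s)%:R.
Hypothesis hw0 : forall s, 0 <= w s.
Hypothesis hw : forall s, Kf w s - w s <= - (T s)%:R.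
Hypothesis hB : forall s, `|(C s)%:R - phi s| <= B * (T s)%:R.
Hypothesis eps0 : 0 <= eps.
Hypothesis B0 : 0 <= B.

Let e s n := En n (fun t => (T t)%:R) s.

Lemma e_ge0 s n : 0 <= e s n.
Proof. by rewrite /e -(En_cst n 0 s); apply: En_le => t; rewrite ler0n. Qed.

Lemma e_noninc s n : e s n.+1 <= e s n.
Proof. by rewrite /e EnSK; apply: En_le. Qed.

Lemma e_noninc' s m n : (m <= n)%N -> e s n <= e s m.
Proof.
move=> /subnK <-; elim: (n - m)%N => [|k IH]; first by rewrite add0n.
by rewrite addSn; apply: le_trans (e_noninc _ _) IH.
Qed.

Lemma e_sum s n : \sum_(t < n) e s t <= w s - En n w s.
Proof.
elim: n => [|n IH]; first by rewrite big_ord0 En0 subrr.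
rewrite big_ord_recr /=.
have h : e s n <= En n w s - En n.+1 w s.
  rewrite EnSK /e -EnB; apply: En_le => t.
  have := hw t; lra.
lra.
Qed.

Lemma Enw_ge0 n s : 0 <= En n w s.
Proof. by rewrite -(En_cst n 0 s); apply: En_le. Qed.

Lemma e_bound s n : n.+1%:R * e s n <= w s.
Proof.
apply: le_trans (_ : \sum_(t < n.+1) e s t <= w s).
  have -> : n.+1%:R = \sum_(t < n.+1) (1 : R) by rewrite sumr_const card_ord.
  rewrite mulr_suml.
  apply: ler_sum => t _; rewrite mul1r; apply: e_noninc'.
  by rewrite -ltnS.
by apply: le_trans (e_sum _ _) _; have := Enw_ge0 n.+1 s; lra.
Qed.

Lemma phi_bound s n : `|En n phi s - phi s| <= eps * \sum_(t < n) e s t.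
Proof.
elim: n => [|n IH]; first by rewrite En0 subrr normr0 big_ord0 mulr0.
rewrite big_ord_recr /= mulrDr.
have -> : En n.+1 phi s - phi s = En n (fun t => Kf phi t - phi t) s + (En n phi s - phi s).
  by rewrite EnSK EnB; ring.
apply: le_trans (ler_normD _ _) _; rewrite addrC lerD //.
apply: le_trans (En_abs _ _ _) _.
by rewrite /e -EnZ; apply: En_le.
Qed.

Lemma a_bound s n : `|En n (fun t => (C t)%:R) s - phi s| <= eps * w s + B * e s n.
Proof.
have -> : En n (fun t => (C t)%:R) s - phi s =
   En n (fun t => (C t)%:R - phi t) s + (En n phi s - phi s) by rewrite EnB; ring.
apply: le_trans (ler_normD _ _) _; rewrite addrC lerD //.
  apply: le_trans (phi_bound _ _) _; apply: ler_wpM2l => //.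
  by apply: le_trans (e_sum _ _) _; have := Enw_ge0 n s; lra.
apply: le_trans (En_abs _ _ _) _.
by rewrite /e -EnZ; apply: En_le.
Qed.

Lemma a_nondecr s : nondecreasing_seq (fun n => En n (fun t => (C t)%:R) s).
Proof.
apply/nondecreasing_seqP => n; rewrite EnSK; exact: En_le.
Qed.

Lemma a_cvg s : cvgn (fun n => En n (fun t => (C t)%:R) s).
Proof.
apply: nondecreasing_is_cvgn; first exact: a_nondecr.
exists 1 => _ [n _ <-]; rewrite -[X in _ <= X](En_cst n 1 s); apply: En_le => t.
by case: (C t); rewrite ?ler01 ?lexx.
Qed.

Lemma markov_main s :
  `|limn (fun n => En n (fun t => (C t)%:R) s) - phi s| <= eps * w s.
Proof.
set a := fun n => _.
apply/ler_addgt0Pr => etaF eta0.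
pose n0 := Num.truncn (B * w s / etaF).
have hn0 : B * w s / etaF < n0.+1%:R by exact: truncnS_gt.
have ev : \forall n \near \oo, `|a n - phi s| <= eps * w s + etaF.
  near=> n.
  have nn0 : (n0 <= n)%N by near: n; exact: nbhs_infty_ge.
  apply: le_trans (a_bound _ _) _; rewrite lerD2l.
  have h1 := e_bound s n.
  have h2 : n0.+1%:R <= n.+1%:R :> R by rewrite ler_nat ltnS.
  have he := e_ge0 s n.
  have hw0s := hw0 s.
  have : B * w s < etaF * n0.+1%:R by rewrite -ltr_pdivrMl // mulrC.
  move=> h3.
  have h4 : B * (n.+1%:R * e s n) <= B * w s by apply: ler_wpM2l.
  have h5 : n0.+1%:R * e s n <= n.+1%:R * e s n by apply: ler_wpM2r.
  have h6 : B * (n0.+1%:R * e s n) <= B * (n.+1%:R * e s n) by apply: ler_wpM2l.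
  have h7 : 0 < n0.+1%:R :> R by rewrite ltr0n.
  rewrite -(ler_pM2l h7).
  have -> : n0.+1%:R * (B * e s n) = B * (n0.+1%:R * e s n) by ring.
  have -> : n0.+1%:R * etaF = etaF * n0.+1%:R by ring.
  lra.
have ca : cvgn a := @a_cvg s.
rewrite ler_norml; apply/andP; split.
  have : phi s - (eps * w s + etaF) <= limn a.
    apply: limr_ge => //; apply: filterS ev => n; rewrite ler_norml => /andP[h _]; lra.
  lra.
have : limn a <= phi s + (eps * w s + etaF).
  apply: limr_le => //; apply: filterS ev => n; rewrite ler_norml => /andP[_ h]; lra.
lra.
Unshelve. all: by end_near.
Qed.

End Markov.

Section Model2.
Variables (R : realType) (N : nat) (b c r : R).

Definition wt (F : 'I_N -> R) (i j : 'I_N) : R :=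
  N%:R^-1 * (F j / \sum_(k < N | k != i) F k).

Lemma dB_collapse (F : 'I_N -> R) (x : config N) (G : config N -> R) :
  \sum_(t : config N) dB_step F x t * G t =
  \sum_(i < N) \sum_(j < N | j != i) wt F i j * G (cupd x i (x j)).
Proof.
rewrite /dB_step.
under eq_bigr do rewrite mulr_suml.
rewrite exchange_big /=; apply: eq_bigr => i _.
under eq_bigr do rewrite mulr_suml.
rewrite exchange_big /=; apply: eq_bigr => j _.
rewrite (bigD1 (cupd x i (x j))) //= eqxx mulr1 [X in _ + X]big1 ?addr0 //.
by move=> t /negPf ->; rewrite mulr0 mul0r.
Qed.

Lemma Kf_trans (d : R) (f : state N -> R) (s : state N) :
  Kf (trans b c r d) f s =
  \sum_(i < N) \sum_(j < N | j != i) wt (fecundity b c r d s) i j *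
   (\sum_(i' < N) \sum_(j' < N | j' != i') wt (fecundity b c r d s) i' j' *
      f (cupd s.1 i (s.1 j), cupd s.2 i' (s.2 j'))).
Proof.
rewrite /Kf.
have -> : \sum_(t : state N) trans b c r d s t * f t =
  \sum_(t1 : config N) \sum_(t2 : config N) dB_step (fecundity b c r d s) s.1 t1 *
     dB_step (fecundity b c r d s) s.2 t2 * f (t1, t2).
  by rewrite pair_bigA /=; apply: eq_bigr => -[t1 t2] _.
under eq_bigr => t1 _.
  under eq_bigr do rewrite -mulrA.
  rewrite -mulr_sumr dB_collapse.
  over.
by rewrite /= dB_collapse.
Qed.

Definition rowsum (F : 'I_N -> R) := \sum_(i < N) \sum_(j < N | j != i) wt F i j.

Lemma rowsum1 (F : 'I_N -> R) : (0 < N)%N ->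
  (forall i, \sum_(k < N | k != i) F k != 0) -> rowsum F = 1.
Proof.
move=> N0 hF; rewrite /rowsum.
under eq_bigr => i _.
  rewrite /wt -mulr_sumr -mulr_suml mulfV ?mulr1 //.
  over.
by rewrite sumr_const card_ord -[_ *+ _]mulr_natr mulVf // pnatr_eq0 -lt0n.
Qed.


Lemma sum_neq (G : 'I_N -> R) i : \sum_(j < N | j != i) G j = \sum_j G j - G i.
Proof. by rewrite [\sum_j G j](bigD1 i) //= addrC addrK. Qed.

Lemma sum_neq0 (G : 'I_N -> R) i : G i = 0 -> \sum_(j < N | j != i) G j = \sum_j G j.
Proof. by move=> h; rewrite sum_neq h subr0. Qed.

Definition pc (x : config N) : R := \sum_i (x i)%:R.

Lemma pc_cupd x i v : pc (cupd x i v) = pc x - (x i)%:R + v%:R.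
Proof.
rewrite /pc (bigD1 i) //= [in RHS](bigD1 i) //= ffunE eqxx.
have -> : \sum_(k < N | k != i) ((cupd x i v) k)%:R = \sum_(k < N | k != i) (x k)%:R :> R.
  by apply: eq_bigr => k /negPf kn; rewrite ffunE kn.
set S := \sum_(k < N | k != i) _; set xi := (x i)%:R; lra.
Qed.

Definition const1 (x : config N) := [forall k, x k] || [forall k, ~~ x k].

Lemma cupd_const x i j : const1 x -> cupd x i (x j) = x.
Proof.
move=> hx; apply/ffunP => k; rewrite ffunE; case: eqP => // ->.
case/orP: hx => /forallP h; first by rewrite !h.
by move: (h i) (h j); case: (x i); case: (x j).
Qed.

Definition good (d : R) := forall (s : state N) k, 0 < fecundity b c r d s k.

Hypothesis N2 : (2 <= N)%N.

Lemma N0 : (0 < N)%N. Proof. by apply: leq_trans N2. Qed.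

Lemma sum_neq_pos (F : 'I_N -> R) i : (forall k, 0 < F k) -> 0 < \sum_(k < N | k != i) F k.
Proof.
move=> hF.
have [j ji] : exists j : 'I_N, j != i.
  have h1 : (1 < N)%N by [].
  case: (eqVneq i (Ordinal h1)) => [ei|ne]; last by exists (Ordinal h1); rewrite eq_sym.
  have h0 : (0 < N)%N by exact: N0.
  by exists (Ordinal h0); rewrite ei.
rewrite (bigD1 j) //=; apply: ltr_wpDr; first by apply: sumr_ge0 => k _; apply: ltW.
exact: hF.
Qed.

Lemma rowsum_good d s : good d -> rowsum (fecundity b c r d s) = 1.
Proof.
move=> g; apply: rowsum1; first exact: N0.
by move=> i; rewrite gt_eqF //; apply: sum_neq_pos => k; apply: g.
Qed.

Lemma wt_ge0 d s i j : good d -> 0 <= wt (fecundity b c r d s) i j.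
Proof.
move=> g; rewrite /wt; apply: mulr_ge0; first by rewrite invr_ge0 ler0n.
apply: divr_ge0; first exact: ltW.
by apply: ltW; apply: sum_neq_pos => k; apply: g.
Qed.

Lemma trans_ge0 d : good d -> forall (s t : state N), 0 <= trans b c r d s t.
Proof.
move=> g s t; rewrite /trans /dB_step; apply: mulr_ge0; apply: sumr_ge0 => i _;
  apply: sumr_ge0 => j _; apply: mulr_ge0; try by rewrite ler0n.
all: by have := wt_ge0 s i j g; rewrite /wt mulrA.
Qed.

Lemma rowsum_mul (F : 'I_N -> R) k :
  \sum_(i < N) \sum_(j < N | j != i) wt F i j * k = rowsum F * k.
Proof. by rewrite /rowsum mulr_suml; apply: eq_bigr => i _; rewrite mulr_suml. Qed.

Lemma Kf_layer1 d s (h : config N -> R) : good d ->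
  Kf (trans b c r d) (fun t => h t.1) s =
  \sum_(i < N) \sum_(j < N | j != i) wt (fecundity b c r d s) i j * h (cupd s.1 i (s.1 j)).
Proof.
move=> g; rewrite Kf_trans; apply: eq_bigr => i _; apply: eq_bigr => j _ /=.
by rewrite rowsum_mul rowsum_good // mul1r.
Qed.

Lemma trans_sum1 d : good d -> forall (s : state N), \sum_t trans b c r d s t = 1.
Proof.
move=> g s.
have := Kf_layer1 s (fun _ => 1) g; rewrite /Kf.
under eq_bigr do rewrite mulr1.
move=> ->.
under eq_bigr do under eq_bigr do rewrite mulr1.
exact: rowsum_good.
Qed.

Lemma Kf_absorbed d s (f : state N -> R) k : good d -> const1 s.1 ->
  (forall y, f (s.1, y) = k) -> Kf (trans b c r d) f s = k.
Proof.
move=> g hc hf; rewrite Kf_trans.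
under eq_bigr do under eq_bigr do rewrite cupd_const //.
under eq_bigr do under eq_bigr do under eq_bigr do under eq_bigr do rewrite hf.
rewrite rowsum_mul rowsum_good // mul1r.
by rewrite rowsum_mul rowsum_good // mul1r.
Qed.

End Model2.

Section Model3.
Variables (R : realType) (N : nat) (b c r : R).
Hypothesis N2 : (2 <= N)%N.
Local Notation pc := (pc R).

Definition bsum (F : 'I_N -> 'I_N -> R) := \sum_(i < N) \sum_(j < N | j != i) F i j.

Lemma bsumD F G : bsum (fun i j => F i j + G i j) = bsum F + bsum G.
Proof. by rewrite /bsum -big_split; apply: eq_bigr => i _; rewrite -big_split. Qed.

Lemma bsumN F : bsum (fun i j => - F i j) = - bsum F.
Proof. by rewrite /bsum -sumrN; apply: eq_bigr => i _; rewrite -sumrN. Qed.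

Lemma bsumB F G : bsum (fun i j => F i j - G i j) = bsum F - bsum G.
Proof. by rewrite bsumD bsumN. Qed.

Lemma bsumZ k F : bsum (fun i j => k * F i j) = k * bsum F.
Proof. by rewrite /bsum mulr_sumr; apply: eq_bigr => i _; rewrite mulr_sumr. Qed.

Lemma bsum_ext F G : (forall i j, j != i -> F i j = G i j) -> bsum F = bsum G.
Proof. by move=> h; apply: eq_bigr => i _; apply: eq_bigr => j; apply: h. Qed.

Lemma bsum_cst k : bsum (fun _ _ => k) = N%:R * (N%:R - 1) * k.
Proof.
rewrite /bsum.
under eq_bigr do rewrite sum_neq sumr_const card_ord.
rewrite sumr_const card_ord -mulr_natr -(mulr_natr k N); ring.
Qed.

Lemma bsum_full F : (forall i, F i i = 0) -> bsum F = \sum_i \sum_j F i j.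
Proof. by move=> h; rewrite /bsum; apply: eq_bigr => i _; rewrite sum_neq0. Qed.

Lemma sum_cst (k : R) : \sum_(i < N) k = N%:R * k.
Proof. by rewrite sumr_const card_ord mulr_natl. Qed.

Lemma bsq (u v : bool) : (u%:R - v%:R)^+2 = u%:R + v%:R - 2 * (u%:R * v%:R) :> R.
Proof. by case: u; case: v => /=; rewrite ?subrr ?subr0 ?sub0r ?expr0n //= ?sqrrN ?expr1n; ring. Qed.

Lemma S_d (x : config N) : bsum (fun i j => (x j)%:R - (x i)%:R) = 0.
Proof.
rewrite bsum_full => [|i]; last by rewrite subrr.
under eq_bigr do rewrite sumrB sum_cst.
by rewrite sumrB sum_cst -mulr_sumr subrr.
Qed.

Lemma S_d2 (x : config N) :
  bsum (fun i j => ((x j)%:R - (x i)%:R)^+2) = 2 * N%:R * pc x - 2 * pc x ^+ 2.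
Proof.
rewrite bsum_full => [|i]; last by rewrite subrr expr0n.
under eq_bigr do under eq_bigr do rewrite bsq.
under eq_bigr do rewrite sumrB big_split /= sum_cst -mulr_sumr -mulr_suml -/(pc x).
rewrite sumrB big_split /= sum_cst -!mulr_sumr -/(pc x); ring.
Qed.


Lemma bsumMr F k : bsum (fun i j => F i j * k) = bsum F * k.
Proof. by rewrite mulrC -bsumZ; apply: bsum_ext => i j _; rewrite mulrC. Qed.

Lemma bsum_sum (F : 'I_N -> 'I_N -> 'I_N -> R) :
  bsum (fun i j => \sum_k F k i j) = \sum_k bsum (F k).
Proof.
rewrite /bsum exchange_big /=; apply: eq_bigr => i _.
by rewrite exchange_big.
Qed.

Lemma NR0 : N%:R != 0 :> R.
Proof. by rewrite pnatr_eq0 -lt0n; apply: leq_trans N2. Qed.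

Lemma nR0 : N%:R - 1 != 0 :> R.
Proof.
rewrite subr_eq0 pnatr_eq1; apply/eqP => h.
by move: N2; rewrite h.
Qed.

Lemma fec0 (s : state N) k : fecundity b c r 0 s k = 1.
Proof. by rewrite /fecundity mul0r addr0. Qed.

Lemma good0 : good N b c r 0.
Proof. by move=> s k; rewrite fec0 ltr01. Qed.

Lemma wt0 (s : state N) i j : wt (fecundity b c r 0 s) i j = (N%:R * (N%:R - 1))^-1.
Proof.
rewrite /wt; under eq_bigr do rewrite fec0.
by rewrite fec0 sum_neq sum_cst mulr1 mul1r invfM.
Qed.

Lemma Kf0_layer1 (s : state N) (h : config N -> R) :
  Kf (trans b c r 0) (fun t => h t.1) s =
  (N%:R * (N%:R - 1))^-1 * bsum (fun i j => h (cupd s.1 i (s.1 j))).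
Proof.
rewrite (Kf_layer1 N2 s h good0) -bsumZ.
by apply: bsum_ext => i j _; rewrite wt0.
Qed.

Lemma Kf0 (s : state N) (f : state N -> R) :
  Kf (trans b c r 0) f s =
  (N%:R * (N%:R - 1))^-1 * bsum (fun i j => (N%:R * (N%:R - 1))^-1 *
     bsum (fun i' j' => f (cupd s.1 i (s.1 j), cupd s.2 i' (s.2 j')))).
Proof.
rewrite Kf_trans -bsumZ; apply: bsum_ext => i j _; rewrite wt0; congr (_ * _).
by rewrite -bsumZ; apply: bsum_ext => i' j' _; rewrite wt0.
Qed.

Lemma S_pc (x : config N) : bsum (fun i j => pc (cupd x i (x j))) = N%:R * (N%:R - 1) * pc x.
Proof.
under bsum_ext => i j _ do rewrite pc_cupd -addrA [_ + (x j)%:R]addrC.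
by rewrite bsumD S_d bsum_cst addr0.
Qed.

Lemma S_site (x : config N) k :
  bsum (fun i j => ((cupd x i (x j)) k)%:R) = ((N%:R - 1)^+2 - 1) * (x k)%:R + pc x.
Proof.
rewrite /bsum (bigD1 k) //=.
under eq_bigr do rewrite ffunE eqxx.
rewrite sum_neq -/(pc x).
under eq_bigr => i ik.
  under eq_bigr do rewrite ffunE eq_sym (negPf ik).
  rewrite sum_neq sum_cst.
  over.
rewrite sum_neq sum_cst; ring.
Qed.

Definition Xf (s : state N) : R := pc s.1 / N%:R.
Definition Af (s : state N) : R := pc s.1 * (N%:R - pc s.1).
Definition mc (s : state N) : R := \sum_k (s.1 k)%:R * (s.2 k)%:R.
Definition Yf (s : state N) : R := N%:R * mc s - pc s.1 * pc s.2.

Lemma K0X s : Kf (trans b c r 0) Xf s = Xf s.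
Proof.
rewrite /Xf (Kf0_layer1 s (fun x => pc x / N%:R)).
rewrite (bsum_ext (G := fun i j => N%:R^-1 * pc (cupd s.1 i (s.1 j)))); last first.
  by move=> i j _; rewrite mulrC.
rewrite bsumZ S_pc.
have h1 := NR0; have h2 := nR0.
by field; apply/andP.
Qed.

Lemma K0A s : Kf (trans b c r 0) Af s = (1 - 2 / (N%:R * (N%:R - 1))) * Af s.
Proof.
rewrite /Af (Kf0_layer1 s (fun x => pc x * (N%:R - pc x))).
set p := pc s.1; set x := s.1.
rewrite (bsum_ext (G := fun i j => p * (N%:R - p) + (N%:R - 2 * p) * ((x j)%:R - (x i)%:R)
      - ((x j)%:R - (x i)%:R)^+2)); last first.
  by move=> i j _; rewrite pc_cupd -/p; ring.
rewrite bsumB bsumD (bsumZ (N%:R - 2 * p)) S_d S_d2 bsumZ bsum_cst -/p.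
have h1 := NR0; have h2 := nR0.
by field; apply/andP.
Qed.

Lemma K0Y s : Kf (trans b c r 0) Yf s = (1 - (N%:R - 1)^-1)^+2 * Yf s.
Proof.
rewrite Kf0 /Yf /mc /=.
set x := s.1; set y := s.2; set p := pc x; set q := pc y.
set M := (N%:R * (N%:R - 1))^-1.
rewrite (bsum_ext (G := fun i j => M * (N%:R * \sum_k ((cupd x i (x j)) k)%:R *
            (((N%:R - 1)^+2 - 1) * (y k)%:R + q) - pc (cupd x i (x j)) * (N%:R * (N%:R - 1) * q)))); last first.
  move=> i j _; congr (_ * _).
  rewrite bsumB bsumZ -S_pc; congr (_ - _); last first.
    by rewrite -bsumZ; apply: bsum_ext => i' j' _.
  congr (_ * _); rewrite bsum_sum; apply: eq_bigr => k _.
  by rewrite (bsumZ (cupd x i (x j) k)%:R (fun i' j' => (cupd y i' (y j') k)%:R)) S_site.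
rewrite bsumZ bsumB (bsumZ N%:R) bsum_sum.
rewrite (eq_bigr (fun k => (((N%:R - 1) ^+ 2 - 1) * (x k)%:R + p) * (((N%:R - 1)^+2 - 1) * (y k)%:R + q))); last first.
  by move=> k _; apply: etrans (bsumMr _ _) _; rewrite S_site.
rewrite (_ : bsum _ = bsum (fun i j => pc (cupd x i (x j))) * (N%:R * (N%:R - 1) * q)); last first.
  exact: bsumMr.
rewrite S_pc -/p.
set a := (N%:R - 1)^+2 - 1.
rewrite (eq_bigr (fun k =>
   a^+2 * ((x k)%:R * (y k)%:R) + (a * q) * (x k)%:R + (a * p) * (y k)%:R + p * q)); last first.
  by move=> k _; ring.
rewrite !big_split /= -!mulr_sumr sum_cst -/p -/q /a.
have h1 := NR0; have h2 := nR0.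
rewrite /M -/(pc x) -/(pc y) -/p -/q. set m := \sum_(i < N) _. field; by apply/andP.
Qed.

End Model3.

Section CvgTools.
Variables (R : realType) (T : Type) (F : set_system T).
Context {FF : Filter F}.

Lemma cvg_sumI (I : finType) (P : pred I) (f : I -> T -> R) (l : I -> R) :
  (forall i, f i x @[x --> F] --> l i) ->
  (\sum_(i | P i) f i x) @[x --> F] --> \sum_(i | P i) l i.
Proof.
move=> h; apply: cvg_big. all: try (move=> i _; exact: h). all: try exact: add_continuous.
Qed.

Lemma cvgMf (f g : T -> R) (a b : R) : f x @[x --> F] --> a -> g x @[x --> F] --> b ->
  (f x * g x) @[x --> F] --> a * b.
Proof. by move=> hf hg; apply: cvgM. Qed.

Lemma cvgVf (f : T -> R) (a : R) : a != 0 -> f x @[x --> F] --> a ->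
  (f x)^-1 @[x --> F] --> a^-1.
Proof. by move=> a0 hf; apply: cvgV. Qed.

Lemma cvgDf (f g : T -> R) (a b : R) : f x @[x --> F] --> a -> g x @[x --> F] --> b ->
  (f x + g x) @[x --> F] --> a + b.
Proof. by move=> hf hg; apply: cvgD. Qed.

Lemma cvgBf (f g : T -> R) (a b : R) : f x @[x --> F] --> a -> g x @[x --> F] --> b ->
  (f x - g x) @[x --> F] --> a - b.
Proof. by move=> hf hg; apply: cvgB. Qed.

Lemma cvgCf (a : R) : (fun=> a) x @[x --> F] --> a.
Proof. exact: cvg_cst. Qed.

End CvgTools.

Section Model4.
Variables (R : realType) (N : nat) (b c r : R).
Hypothesis N2 : (2 <= N)%N.
Local Notation pc := (pc R).
Local Notation Af := (@Af R N).
Local Notation Yf := (@Yf R N).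
Local Notation mc := (@mc R N).
Local Notation Xf := (@Xf R N).

Lemma fec_cvg (s : state N) k :
  fecundity b c r d s k @[d --> (0 : R)] --> fecundity b c r 0 s k.
Proof.
rewrite /fecundity; apply: cvgDf; first exact: cvgCf.
apply: cvgMf; [exact: cvg_id | exact: cvgCf].
Qed.

Lemma den_ne0 (s : state N) i : \sum_(k < N | k != i) fecundity b c r 0 s k != 0.
Proof. by rewrite gt_eqF //; apply: sum_neq_pos => // k; apply: good0. Qed.

Lemma wt_cvg (s : state N) i j :
  wt (fecundity b c r d s) i j @[d --> (0 : R)] --> wt (fecundity b c r 0 s) i j.
Proof.
rewrite /wt; apply: cvgMf; first exact: cvgCf.
apply: cvgMf; first exact: fec_cvg.
apply: cvgVf; first exact: den_ne0.
apply: cvg_sumI => k; exact: fec_cvg.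
Qed.

Lemma dB_cvg (s : state N) (x y : config N) :
  dB_step (fecundity b c r d s) x y @[d --> (0 : R)] --> dB_step (fecundity b c r 0 s) x y.
Proof.
rewrite /dB_step; apply: cvg_sumI => i; apply: cvg_sumI => j.
apply: cvgMf; last exact: cvgCf.
exact: (@wt_cvg s i j).
Qed.

Lemma Kf_cvg (s : state N) (f : state N -> R) :
  Kf (trans b c r d) f s @[d --> (0 : R)] --> Kf (trans b c r 0) f s.
Proof.
rewrite /Kf; apply: cvg_sumI => t; apply: cvgMf; last exact: cvgCf.
rewrite /trans; apply: cvgMf; exact: dB_cvg.
Qed.


Lemma LB (A B C D : 'I_N -> R) :
  \sum_i \sum_j (A j + B i) * (C j + D i) =
  N%:R * \sum_j A j * C j + (\sum_j A j) * (\sum_i D i) + (\sum_i B i) * (\sum_j C j)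
  + N%:R * \sum_i B i * D i.
Proof.
under eq_bigr => i _.
  rewrite (eq_bigr (fun j => A j * C j + A j * D i + B i * C j + B i * D i)); last first.
    by move=> j _; ring.
  rewrite !big_split /= -mulr_suml -mulr_sumr sum_cst.
  over.
rewrite !big_split /= -mulr_sumr -mulr_suml -mulr_sumr sum_cst; ring.
Qed.

Lemma payoffE (s : state N) j :
  payoff b c r s j = - c * (s.1 j)%:R + b / (N%:R - 1) * (pc s.1 - (s.1 j)%:R)
    + (r - 1) * (s.2 j)%:R + 1.
Proof. by rewrite /payoff sum_neq. Qed.

Lemma bool_sq (u : bool) : (u%:R : R) * u%:R = u%:R.
Proof. by case: u; rewrite ?mulr0 ?mulr1. Qed.

Lemma sutot (s : state N) : \sum_j payoff b c r s j =
  - c * pc s.1 + b / (N%:R - 1) * (N%:R * pc s.1 - pc s.1) + (r - 1) * pc s.2 + N%:R.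
Proof.
under eq_bigr do rewrite payoffE.
rewrite !big_split /= -!mulr_sumr sumrB !sum_cst -/(pc s.1) -/(pc s.2); ring.
Qed.

Lemma sux (s : state N) : \sum_j payoff b c r s j * (s.1 j)%:R =
  - c * pc s.1 + b / (N%:R - 1) * (pc s.1 ^+ 2 - pc s.1) + (r - 1) * mc s + pc s.1.
Proof.
rewrite (eq_bigr (fun j => - c * (s.1 j)%:R + b / (N%:R - 1) * (pc s.1 * (s.1 j)%:R - (s.1 j)%:R)
    + (r - 1) * ((s.1 j)%:R * (s.2 j)%:R) + (s.1 j)%:R)); last first.
  move=> j _; rewrite payoffE.
  have h := bool_sq (s.1 j).
  set xj := (s.1 j)%:R in h *; set yj := (s.2 j)%:R.
  have -> : (- c * xj + b / (N%:R - 1) * (pc s.1 - xj) + (r - 1) * yj + 1) * xj =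
    - c * (xj * xj) + b / (N%:R - 1) * (pc s.1 * xj - xj * xj) + (r - 1) * (xj * yj) + xj by ring.
  by rewrite h.
rewrite !big_split /= -!mulr_sumr sumrB -mulr_sumr -/(pc s.1) /mc; ring.
Qed.

Definition Usum (s : state N) i := \sum_(k < N | k != i) payoff b c r s k.

Lemma KeyD (s : state N) :
  bsum (fun i j => ((N%:R - 1) * payoff b c r s j - Usum s i) * ((s.1 j)%:R - (s.1 i)%:R)) =
  (N%:R - 2) * (- (c + b / (N%:R - 1)) * Af s + (r - 1) * Yf s).
Proof.
rewrite bsum_full => [|i]; last by rewrite subrr mulr0.
set Ut := \sum_j payoff b c r s j.
rewrite (eq_bigr (fun i => \sum_j ((N%:R - 1) * payoff b c r s j + (payoff b c r s i - Ut)) *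
     ((s.1 j)%:R + - (s.1 i)%:R))); last first.
  move=> i _; apply: eq_bigr => j _; rewrite /Usum sum_neq -/Ut; ring.
rewrite LB.
rewrite (eq_bigr (fun j => (N%:R - 1) * (payoff b c r s j * (s.1 j)%:R))); last by move=> j _; ring.
rewrite -mulr_sumr sux sumrB sum_cst sumrN -/(pc s.1) -/Ut.
rewrite -mulr_sumr -/Ut.
rewrite [\sum_i (payoff b c r s i - Ut) * _](eq_bigr (fun i => - (payoff b c r s i * (s.1 i)%:R) + Ut * (s.1 i)%:R)); last first.
  by move=> i _; rewrite -mulNrn; ring.
rewrite big_split /= sumrN sux -mulr_sumr -/(pc s.1) /Ut sutot /Af /Yf; ring.
Qed.


Definition Sd d (s : state N) i := \sum_(k < N | k != i) fecundity b c r d s k.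

Lemma Sd_eq d s i : Sd d s i = (N%:R - 1) + d * Usum s i.
Proof.
rewrite /Sd /fecundity big_split /= -mulr_sumr sum_neq sum_cst mulr1.
by rewrite /Usum.
Qed.

Definition Qd (s : state N) d := N%:R^-2 * bsum (fun i j =>
  ((N%:R - 1) * payoff b c r s j - Usum s i) / ((N%:R - 1) * Sd d s i) *
  ((s.1 j)%:R - (s.1 i)%:R)).

Lemma Sd_ne0 d s i : good N b c r d -> Sd d s i != 0.
Proof. by move=> g; rewrite gt_eqF //; apply: sum_neq_pos => // k; apply: g. Qed.

Lemma drift_eq d s : good N b c r d ->
  Kf (trans b c r d) Xf s - Xf s = d * Qd s d.
Proof.
move=> g.
rewrite /Xf (Kf_layer1 N2 s (fun x => pc x / N%:R) g).
have -> : pc s.1 / N%:R = rowsum (fecundity b c r d s) * (pc s.1 / N%:R).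
  by rewrite rowsum_good // mul1r.
rewrite -rowsum_mul.
rewrite -[X in X - _]/(bsum _) -[X in _ - X]/(bsum _) -bsumB.
rewrite (bsum_ext (G := fun i j => d * (N%:R^-2 * ((((N%:R - 1) * payoff b c r s j - Usum s i) /
   ((N%:R - 1) * Sd d s i)) * ((s.1 j)%:R - (s.1 i)%:R))) +
   (N%:R^-2 * (N%:R - 1)^-1) * ((s.1 j)%:R - (s.1 i)%:R))); last first.
  move=> i j _; rewrite /wt -/(Sd d s i) pc_cupd.
  have hS := Sd_ne0 s i g; rewrite Sd_eq in hS *; rewrite /fecundity.
  have h1 := NR0 R N2; have h2 := nR0 R N2.
  by field; rewrite h1 h2 hS.
by rewrite bsumD (bsumZ (N%:R^-2 * (N%:R - 1)^-1)) S_d mulr0 addr0 bsumZ bsumZ /Qd.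
Qed.

Definition Dd (s : state N) := (N%:R - 2) / (N%:R ^+ 2 * (N%:R - 1) ^+ 2) *
   (- (c + b / (N%:R - 1)) * Af s + (r - 1) * Yf s).

Lemma Qd0 s : Qd s 0 = Dd s.
Proof.
rewrite /Qd.
under bsum_ext => i j _ do rewrite Sd_eq mul0r addr0.
rewrite (bsum_ext (G := fun i j => ((N%:R - 1) ^+2)^-1 * (((N%:R - 1) * payoff b c r s j - Usum s i) *
   ((s.1 j)%:R - (s.1 i)%:R)))); last by move=> i j _; rewrite -expr2; ring.
rewrite bsumZ KeyD /Dd.
have h1 := NR0 R N2; have h2 := nR0 R N2.
by field; rewrite h1 h2.
Qed.

Lemma Qd_cvg s : Qd s d @[d --> (0 : R)] --> Qd s 0.
Proof.
rewrite /Qd; apply: cvgMf; first exact: cvgCf.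
apply: cvg_sumI => i; apply: cvg_sumI => j.
apply: cvgMf; last exact: cvgCf.
apply: cvgMf; first exact: cvgCf.
apply: cvgVf.
  rewrite mulf_neq0 //; first exact: nR0.
  by rewrite /Sd; apply: den_ne0.
apply: cvgMf; first exact: cvgCf.
rewrite /Sd; apply: cvg_sumI => k; exact: fec_cvg.
Qed.


End Model4.

Section KfLin.
Variables (R : realType) (S : finType) (K : S -> S -> R).
Lemma Kf_lin (f g : S -> R) k s : Kf K (fun t => f t + k * g t) s = Kf K f s + k * Kf K g s.
Proof.
rewrite /Kf mulr_sumr -big_split /=; apply: eq_bigr => t _; ring.
Qed.
Lemma KfZ (f : S -> R) k s : Kf K (fun t => k * f t) s = k * Kf K f s.
Proof. by rewrite /Kf mulr_sumr; apply: eq_bigr => t _; ring. Qed.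
End KfLin.

Section Final1.
Variables (R : realType) (N : nat).
Hypothesis N2 : (2 <= N)%N.
Local Notation pc := (@pc R N).
Local Notation Af := (@Af R N).
Local Notation Yf := (@Yf R N).
Local Notation mc := (@mc R N).
Local Notation Xf := (@Xf R N).

Definition cnt (x : config N) : nat := \sum_i nat_of_bool (x i).

Lemma pc_cnt x : pc x = (cnt x)%:R.
Proof. by rewrite /pc /cnt natr_sum. Qed.

Lemma cnt_le x : (cnt x <= N)%N.
Proof.
rewrite /cnt; apply: leq_trans (_ : \sum_(i < N) 1 <= N)%N.
  by apply: leq_sum => i _; case: (x i).
by rewrite sum1_card card_ord.
Qed.

Lemma cnt_lt (x : config N) : ~~ [forall i, x i] -> (cnt x < N)%N.
Proof.
rewrite negb_forall => /existsP [i xi].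
rewrite /cnt (bigD1 i) //= (negPf xi) add0n.
have : (\sum_(k < N | k != i) nat_of_bool (x k) <= \sum_(k < N | k != i) 1)%N.
  by apply: leq_sum => k _; case: (x k).
move=> h; apply: leq_ltn_trans h _.
rewrite sum1_card cardC1 card_ord.
by case: N N2 => [|m].
Qed.

Lemma cnt_gt (x : config N) : ~~ [forall i, ~~ x i] -> (0 < cnt x)%N.
Proof.
rewrite negb_forall => /existsP [i]; rewrite negbK => xi.
by rewrite /cnt (bigD1 i) //= xi.
Qed.

Lemma Af_ge0 s : 0 <= Af s.
Proof.
rewrite /Af pc_cnt -natrB ?cnt_le // -natrM ler0n //.
Qed.

Lemma Af_ge1 s : ~~ const1 s.1 -> 1 <= Af s.
Proof.
rewrite /const1 negb_or => /andP [h1 h2].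
have l1 := cnt_lt h1; have l2 := cnt_gt h2.
rewrite /Af pc_cnt -natrB ?cnt_le // -natrM ler1n muln_gt0 l2 subn_gt0 l1.
by [].
Qed.

Lemma const_allT (x : config N) : [forall i, x i] -> pc x = N%:R.
Proof. by move=> /forallP h; rewrite /pc; under eq_bigr do rewrite h; rewrite sumr_const card_ord. Qed.

Lemma const_allF (x : config N) : [forall i, ~~ x i] -> pc x = 0.
Proof. by move=> /forallP h; rewrite /pc big1 // => i _; rewrite (negPf (h i)). Qed.

Lemma const_A (t : state N) : const1 t.1 -> Af t = 0.
Proof.
case/orP => h; rewrite /Af; first by rewrite const_allT // subrr mulr0.
by rewrite const_allF // mul0r.
Qed.

Lemma const_Y (t : state N) : const1 t.1 -> Yf t = 0.
Proof.
case/orP => h; rewrite /Yf /mc.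
  move/forallP: (h) => h'; under eq_bigr do rewrite h' mul1r.
  by rewrite const_allT // -/(pc t.2) subrr.
move/forallP: (h) => h'; under eq_bigr do rewrite (negPf (h' _)) mul0r.
by rewrite const_allF // big1 // mulr0 mul0r subrr.
Qed.

Lemma const_X (t : state N) : const1 t.1 -> Xf t = ([forall i, t.1 i])%:R.
Proof.
case/orP => h; rewrite /Xf.
  by rewrite const_allT // h mulfV // NR0.
rewrite const_allF // mul0r.
have : ~~ [forall i, t.1 i].
  have h0 : (0 < N)%N by apply: leq_trans N2.
  apply/negP => /forallP h1; move/forallP: h => /(_ (Ordinal h0)).
  by rewrite h1.
by move/negPf => ->.
Qed.

End Final1.

Section Final2.
Variables (R : realType) (N : nat) (b c r : R).
Hypothesis N2 : (2 <= N)%N.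
Local Notation pc := (@pc R N).
Local Notation Af := (@Af R N).
Local Notation Yf := (@Yf R N).
Local Notation mc := (@mc R N).
Local Notation Xf := (@Xf R N).

Definition nR : R := N%:R - 1.
Definition kA : R := - (N%:R - 2) * (c + b / nR) / (2 * N%:R * nR).
Definition kY : R := (N%:R - 2) * (r - 1) / (N%:R ^+ 2 * (2 * nR - 1)).
Definition gf (t : state N) : R := kA * Af t + kY * Yf t.
Definition phi (d : R) (t : state N) : R := Xf t + d * gf t.
Definition wA (t : state N) : R := N%:R * nR * Af t.
Definition Tp : pred (state N) := fun t => ~~ const1 t.1.
Definition Cp : pred (state N) := fun t => [forall i, t.1 i].
Definition epsf d := \sum_(t : state N) `|Kf (trans b c r d) (phi d) t - phi d t|.
Definition Bf d := \sum_(t : state N) `|(Cp t)%:R - phi d t|.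

Lemma transn_g d n (s t : state N) : transn b c r d n s t = gtransn (trans b c r d) n s t.
Proof.
elim: n s => [|n IH] s //=.
by apply: eq_bigr => u _; rewrite IH.
Qed.

Lemma rho1_lim d (s : state N) : rho1 b c r d s = limn (fun n => En (trans b c r d) n (fun t => (Cp t)%:R) s).
Proof.
rewrite /rho1; congr (limn _); apply: funext => n.
rewrite /allC_prob /En big_mkcond /=; apply: eq_bigr => t _.
by rewrite transn_g /Cp; case: [forall i, t.1 i]; rewrite ?mulr1 ?mulr0.
Qed.

Lemma le_sum_term (F : state N -> R) t : (forall u, 0 <= F u) -> F t <= \sum_u F u.
Proof.
move=> h; rewrite (bigD1 t) //= lerDl; apply: sumr_ge0 => u _; exact: h.
Qed.

Lemma gf_const t : const1 t.1 -> gf t = 0.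
Proof. by move=> h; rewrite /gf const_A // const_Y // !mulr0 addr0. Qed.

Lemma master d : good N b c r d ->
  (forall t, Tp t -> Kf (trans b c r d) Af t - Af t <= - (N%:R * nR)^-1 * Af t) ->
  forall s, `|rho1 b c r d s - phi d s| <= epsf d * wA s.
Proof.
move=> g hA s; rewrite rho1_lim.
have K0 := trans_ge0 N2 g; have K1 := trans_sum1 N2 g.
apply: (@markov_main R (state N) (trans b c r d) K0 K1 Tp Cp (phi d) wA (epsf d) (Bf d)).
- move=> t; rewrite /Tp; case: (boolP (const1 t.1)) => hc /=.
    by rewrite (Kf_absorbed N2 (k := 0) g hc) //= => y; rewrite hc.
  apply: le_trans (_ : _ <= Kf (trans b c r d) (fun _ => 1) t) _.
    by apply: (Kf_le K0) => u; case: (~~ const1 u.1); rewrite ?ler01 ?lexx.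
  by rewrite /Kf; under eq_bigr do rewrite mulr1; rewrite K1.
- move=> t; rewrite /Cp; case: (boolP [forall i, t.1 i]) => hc /=.
    rewrite (Kf_absorbed N2 (k := 1) g) //; first by rewrite /const1 hc.
    by move=> y /=; rewrite hc.
  by apply: sumr_ge0 => u _; apply: mulr_ge0 => //; rewrite ler0n.
- move=> t; rewrite /Tp; case: (boolP (const1 t.1)) => hc /=.
    rewrite (Kf_absorbed N2 (k := phi d t) g hc); first by rewrite subrr normr0 mulr0.
    by move=> y; rewrite /phi /Xf /= gf_const // (gf_const hc).
  rewrite mulr1; apply: (le_sum_term (F := fun t => `|Kf (trans b c r d) (phi d) t - phi d t|)).
  by move=> u.
- move=> t; rewrite /wA; apply: mulr_ge0; last exact: (@Af_ge0 R N).
  by apply: mulr_ge0; rewrite ?ler0n // /nR subr_ge0 ler1n; apply: leq_trans N2.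
- move=> t; rewrite /wA KfZ.
  rewrite /Tp; case: (boolP (const1 t.1)) => hc /=.
    rewrite (Kf_absorbed N2 (k := Af t) g hc); first by rewrite subrr oppr0.
    by move=> y; rewrite /Af.
  have h1 := hA t hc; have h2 := @Af_ge1 R N N2 t hc.
  have hN : 0 < N%:R * nR.
    by apply: mulr_gt0; rewrite ?ltr0n /nR ?subr_gt0 ?ltr1n //; apply: leq_trans N2.
  have h3 := ler_wpM2l (ltW hN) h1.
  have e : N%:R * nR * (- (N%:R * nR)^-1 * Af t) = - Af t.
    by rewrite mulNr mulrN mulrA mulfV ?mul1r // gt_eqF.
  rewrite e mulrBr in h3.

  lra.
- move=> t; rewrite /Tp; case: (boolP (const1 t.1)) => hc /=.
    by rewrite /phi gf_const // mulr0 addr0 const_X // /Cp subrr normr0 mulr0.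
  rewrite mulr1; apply: (le_sum_term (F := fun t => `|(Cp t)%:R - phi d t|)).
  by move=> u.
- by apply: sumr_ge0.
- by apply: sumr_ge0.
Qed.

End Final2.

Section Final3.
Variables (R : realType) (N : nat) (b c r : R).
Hypothesis N3 : (3 <= N)%N.
Let N2 : (2 <= N)%N. Proof. exact: ltnW. Qed.
Local Notation pc := (@pc R N).
Local Notation Af := (@Af R N).
Local Notation Yf := (@Yf R N).
Local Notation mc := (@mc R N).
Local Notation Xf := (@Xf R N).
Local Notation gf := (@gf R N b c r).
Local Notation phi := (@phi R N b c r).
Local Notation kA := (@kA R N b c).
Local Notation kY := (@kY R N r).
Local Notation nRR := (@nR R N).
Local Notation epsf := (@epsf R N b c r).
Local Notation Dd := (@Dd R N b c r).
Local Notation Qd := (@Qd R N b c r).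
Local Notation Tp := (@Tp N).

Lemma Kf_gf d s : Kf (trans b c r d) gf s =
  kA * Kf (trans b c r d) Af s + kY * Kf (trans b c r d) Yf s.
Proof. by rewrite /Kf /gf !mulr_sumr -big_split; apply: eq_bigr => t _ /=; ring. Qed.

Lemma Kf_phi d s : Kf (trans b c r d) (phi d) s = Kf (trans b c r d) Xf s + d * Kf (trans b c r d) gf s.
Proof. by rewrite /Kf /phi mulr_sumr -big_split; apply: eq_bigr => t _ /=; ring. Qed.

Lemma n2R0 : 2 * (N%:R - 1) - 1 != 0 :> R.
Proof.
rewrite (_ : 2 * (N%:R - 1) - 1 = (2 * N - 3)%:R); last first.
  rewrite natrB; last by apply: leq_trans (_ : 3 <= 2 * 3)%N _ => //; rewrite leq_mul2l.
  by rewrite natrM; ring.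
by rewrite pnatr_eq0 -lt0n subn_gt0; apply: leq_trans (_ : 3 < 2 * 3)%N _ => //; rewrite leq_mul2l.
Qed.

Lemma K0g s : Kf (trans b c r 0) gf s - gf s = - Dd s.
Proof.
rewrite Kf_gf K0A // K0Y // /gf /Dd /kA /kY /nR.
have h1 := NR0 R N2; have h2 := nR0 R N2; have h3 := n2R0.
by field; rewrite h1 h2 h3.
Qed.

Definition psi (s : state N) d := Qd s d + (Kf (trans b c r d) gf s - gf s).

Lemma psi_cvg s : psi s d @[d --> (0 : R)^'+] --> 0.
Proof.
have hl : psi s d @[d --> (0 : R)] --> Qd s 0 + (Kf (trans b c r 0) gf s - gf s).
  apply: cvgDf; first exact: Qd_cvg.
  apply: cvgBf; [exact: Kf_cvg | exact: cvgCf].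
have e : Qd s 0 + (Kf (trans b c r 0) gf s - gf s) = 0.
  by rewrite K0g Qd0 // subrr.
rewrite e in hl; exact: cvg_at_right_filter hl.
Qed.

Lemma phi_step d s : good N b c r d ->
  Kf (trans b c r d) (phi d) s - phi d s = d * psi s d.
Proof.
move=> g; rewrite Kf_phi /psi mulrDr -(drift_eq N2 s g) /phi; ring.
Qed.

Definition etaF d := \sum_(t : state N) `|psi t d|.

Lemma eta_cvg : etaF d @[d --> (0 : R)^'+] --> 0.
Proof.
have hl : etaF d @[d --> (0 : R)^'+] --> \sum_(t : state N) `|0 : R|.
  apply: cvg_sumI => t; apply: cvg_norm; exact: psi_cvg.
have e : \sum_(t : state N) `|0 : R| = 0 by rewrite big1 // => t _; rewrite normr0.
by rewrite e in hl.
Qed.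

Lemma epsf_eta d : 0 <= d -> good N b c r d -> epsf d = d * etaF d.
Proof.
move=> d0 g; rewrite /epsf /etaF mulr_sumr; apply: eq_bigr => t _.
by rewrite phi_step // normrM ger0_norm.
Qed.

Lemma ev_good : \forall d \near (0 : R)^'+, good N b c r d.
Proof.
apply: filter_forall => s; apply: filter_forall => k.
have := cvg_at_right_filter (@fec_cvg R N b c r s k).
rewrite fec0 => h; exact: (cvgr_gt _ h _ ltr01).
Qed.

Lemma hA0 t : Tp t -> Kf (trans b c r 0) Af t - Af t <= - (N%:R * nRR)^-1 * Af t.
Proof.
move=> _; rewrite K0A //.
have hA := @Af_ge0 R N t.
have hN : 0 < N%:R * nRR.
  by apply: mulr_gt0; rewrite ?ltr0n /nR ?subr_gt0 ?ltr1n //; apply: leq_trans N2.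
have hi : 0 < (N%:R * nRR)^-1 by rewrite invr_gt0.
rewrite -/(nRR) mulrBl mul1r (mulrC 2) -mulrA mulr2n mulrDl.
set k := (N%:R * nRR)^-1.
have : 0 <= k * Af t by apply: mulr_ge0 => //; apply: ltW.
lra.
Qed.

Lemma ev_A : \forall d \near (0 : R)^'+,
  forall t, Tp t -> Kf (trans b c r d) Af t - Af t <= - (N%:R * nRR)^-1 * Af t.
Proof.
apply: filter_forall => t.
case: (boolP (Tp t)) => ht; last by apply: nearW => d /= h; move: h.
have h2 := @Af_ge1 R N N2 t ht.
have hN : 0 < N%:R * nRR.
  by apply: mulr_gt0; rewrite ?ltr0n /nR ?subr_gt0 ?ltr1n //; apply: leq_trans N2.
have hi : 0 < (N%:R * nRR)^-1 by rewrite invr_gt0.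
have hc : Kf (trans b c r d) Af t - Af t @[d --> (0 : R)^'+] -->
          Kf (trans b c r 0) Af t - Af t.
  apply: cvg_at_right_filter; apply: cvgBf; [exact: Kf_cvg | exact: cvgCf].
have hlt : Kf (trans b c r 0) Af t - Af t < - (N%:R * nRR)^-1 * Af t.
  rewrite K0A // -/(nRR) mulrBl mul1r (mulrC 2) -mulrA mulr2n mulrDl.
  set k := (N%:R * nRR)^-1.
  have : 0 < k * Af t by apply: mulr_gt0 => //; lra.
  lra.
apply: filterS (cvgr_le _ hc _ hlt) => d h _; exact: h.
Qed.

End Final3.

Section Final4.
Variables (R : realType) (N : nat) (b c r : R).
Hypothesis N3 : (3 <= N)%N.
Let N2 : (2 <= N)%N. Proof. exact: ltnW. Qed.
Local Notation pc := (@pc R N).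
Local Notation Af := (@Af R N).
Local Notation Yf := (@Yf R N).
Local Notation mc := (@mc R N).
Local Notation Xf := (@Xf R N).
Local Notation gf := (@gf R N b c r).
Local Notation phi := (@phi R N b c r).
Local Notation epsf := (@epsf R N b c r).
Local Notation wA := (@wA R N).
Local Notation etaf := (@etaF R N b c r).

Lemma rho1_0 s : rho1 b c r 0 s = Xf s.
Proof.
have g0 : good N b c r 0 by exact: good0.
have := master N2 g0 (@hA0 R N b c r N3) s.
rewrite (epsf_eta N3 (lexx 0) g0) !mul0r normr_le0 subr_eq0 /phi mul0r addr0.
by move/eqP.
Qed.

Lemma wA_ge0 s : 0 <= wA s.
Proof.
rewrite /wA; apply: mulr_ge0; last exact: (@Af_ge0 R N).
by apply: mulr_ge0; rewrite ?ler0n // /nR subr_ge0 ler1n; apply: leq_trans N2.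
Qed.

Lemma eta_ge0 d : 0 <= etaf d.
Proof. by apply: sumr_ge0. Qed.

Lemma main_cvg s :
  (fun h : R => h^-1 * (rho1 b c r h s - rho1 b c r 0 s)) x @[x --> 0^'+] --> gf s.
Proof.
apply/cvgrPdist_le => e e0.
have hw := wA_ge0 s.
have e'0 : 0 < e / (wA s + 1) by apply: divr_gt0 => //; lra.
have hev := cvgr_dist_le _ _ (@eta_cvg R N b c r N3) _ e'0.
have hpos := @nbhs_right_gt R 0.
near=> h.
have hp : 0 < h by near: h.
have g : good N b c r h by near: h; exact: (ev_good N b c r).
have hA : forall t, Tp t -> Kf (trans b c r h) Af t - Af t <= - (N%:R * nR R N)^-1 * Af t.
  by near: h; exact: (ev_A b c r N3).
have he : `|0 - etaf h| <= e / (wA s + 1) by near: h; apply: hev.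
have hm := master N2 g hA s.
rewrite (epsf_eta N3 (ltW hp) g) in hm.
rewrite rho1_0.
have eq : gf s - h^-1 * (rho1 b c r h s - Xf s) = - (h^-1 * (rho1 b c r h s - phi h s)).
  by rewrite /phi; field; rewrite gt_eqF.
rewrite eq normrN normrM ger0_norm ?invr_ge0 ?(ltW hp) //.
rewrite sub0r normrN ger0_norm ?eta_ge0 // in he.
have h1 : h^-1 * `|rho1 b c r h s - phi h s| <= etaf h * wA s.
  rewrite -(ler_pM2l hp) mulrA mulfV ?gt_eqF // mul1r mulrA //.
have h2 : etaf h * wA s <= e / (wA s + 1) * wA s by apply: ler_wpM2r.
have h3 : e / (wA s + 1) * wA s <= e.
  rewrite mulrAC ler_pdivrMr; last by lra.
  rewrite mulrDr mulr1; have := ltW e0; lra.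
by apply: le_trans h1 (le_trans h2 h3).
Unshelve. all: by end_near.
Qed.

End Final4.

Section Final5.
Variables (R : realType) (N : nat) (b c r : R).
Hypothesis N3 : (3 <= N)%N.
Let N2 : (2 <= N)%N. Proof. exact: ltnW. Qed.
Local Notation pc := (@pc R N).
Local Notation Af := (@Af R N).
Local Notation Yf := (@Yf R N).
Local Notation mc := (@mc R N).
Local Notation gf := (@gf R N b c r).

Let h0 : (0 < N)%N. Proof. by apply: leq_trans N2. Qed.

Lemma pc_xi : pc (xi_single N).1 = 1.
Proof.
rewrite /pc (bigD1 (Ordinal h0)) //= ffunE eqxx big1 ?addr0 // => k kn.
rewrite ffunE; case: eqP => //= hk; exfalso; move: kn; apply/negP; rewrite negbK.
by apply/eqP; apply: val_inj.
Qed.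

Lemma mc_xi : mc (xi_single N) = 1.
Proof.
rewrite /mc (eq_bigr (fun k => ((xi_single N).1 k)%:R)); first exact: pc_xi.
by move=> k _; rewrite /= bool_sq.
Qed.

Lemma gf_xi : gf (xi_single N) = kA N b c * (N%:R - 1) + kY N r * (N%:R - 1).
Proof.
rewrite /gf /Af /Yf pc_xi mc_xi.
by rewrite !mul1r mulr1.
Qed.

Lemma cond_equiv : 0 < c ->
  (0 < gf (xi_single N) <->
   b / c < - (N%:R - 1) + (r - 1) / c * (2 * (N%:R - 1) ^+ 2 / (N%:R * (2 * N%:R - 3)))).
Proof.
move=> c0.
have h1 := NR0 R N2; have h2 := nR0 R N2; have h3 := @n2R0 R N N3.
have h4 : 2 * N%:R - 3 != 0 :> R.
  by move: h3; rewrite (_ : 2 * (N%:R - 1) - 1 = 2 * N%:R - 3 :> R) //; ring.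
have hc : c != 0 by rewrite gt_eqF.
set RHS := - (N%:R - 1) + _.
have e : gf (xi_single N) = (N%:R - 2) / (2 * N%:R * (N%:R - 1)) * (c * (RHS - b / c)).
  rewrite gf_xi /RHS /kA /kY /nR.
  by field; rewrite hc h4 h1 h2.
have hpos : 0 < (N%:R - 2) / (2 * N%:R * (N%:R - 1)) :> R.
  apply: divr_gt0.
    by rewrite subr_gt0 ltr_nat.
  apply: mulr_gt0; first by apply: mulr_gt0; rewrite ?ltr0n.
  by rewrite subr_gt0 ltr1n.
rewrite e pmulr_rgt0 // pmulr_rgt0 // subr_gt0.
by split.
Qed.

End Final5.

Unset Implicit Arguments.

Theorem mainTheorem4 (R : realType) (N : nat) (b c r : R) :
  (3 <= N)%N -> 0 <= r -> 0 < c ->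
  exists D : R,
    ((fun h : R => h^-1 * (rho1 b c r h (xi_single N)
                           - rho1 b c r 0 (xi_single N))) x @[x --> 0^'+] --> D)
    /\
    (0 < D <->
       b / c < - (N%:R - 1)
               + (r - 1) / c * (2 * (N%:R - 1) ^+ 2 / (N%:R * (2 * N%:R - 3)))).
Proof.
move=> N3 _ c0.
exists (@gf R N b c r (xi_single N)); split.
  exact: main_cvg.
exact: cond_equiv.
Qed.
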